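(* Let $H$ be a Hermitian operator on a finite-dimensional Hilbert space $\mathcal H_S$, $\beta>0$, $Z(\beta)=\operatorname{tr}e^{-\beta H}$, $\rho_\beta=e^{-\beta H}/Z(\beta)$, and let $U_\theta$ be a (local) unitary on $\mathcal H_S$. Define $\Delta H=U_\theta^\dagger HU_\theta-H$ and, for real $t$, $\rho_{\beta,\theta}(t)=e^{iHt}U_\theta^\dagger\rho_\beta U_\theta e^{-iHt}$. Then for all $t$, $$\langle\sqrt{\rho_\beta}|\sqrt{\rho_{\beta,\theta}(t)}\rangle=\operatorname{tr}\big(\sqrt{\rho_\beta}\sqrt{\rho_{\beta,\theta}(t)}\big)\ge e^{-\beta\|\Delta H\|/2},$$ where $\|\cdot\|$ is the operator norm.
   Context: For a density matrix $\rho$ on $\mathcal H_S$, its canonical purification is $|\sqrt\rho\rangle=(\sqrt\rho\otimes\mathbb 1_a)|\Phi\rangle\in\mathcal H_S\otimes\mathcal H_a$, where $\mathcal H_a\cong\mathcal H_S$ is an ancilla and $|\Phi\rangle=\sum_i|i\rangle_s|i\rangle_a$ is the unnormalized maximally entangled state; then $\langle\sqrt{\rho_1}|\sqrt{\rho_2}\rangle=\operatorname{tr}(\sqrt{\rho_1}\sqrt{\rho_2})$. *)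

(* Defs.v *)
From HB Require Import structures.
From mathcomp Require Import all_boot all_order all_algebra.
From mathcomp Require Import sesquilinear spectral.
From mathcomp Require Import classical_sets reals.
From mathcomp.analysis Require Import sequences exp trigo.
From mathcomp Require Import complex.

Set Implicit Arguments.
Unset Strict Implicit.
Unset Printing Implicit Defensive.

Import Order.TTheory GRing.Theory Num.Theory.
Local Open Scope ring_scope.
Local Open Scope classical_set_scope.

Definition dagger {R : realType} m n (A : 'M[R[i]]_(m, n)) : 'M[R[i]]_(n, m) :=
  map_mx (@Num.conj R[i]) (A ^T).


(* Functional calculus of a Hermitian (more generally normal) matrix via the
   spectral theorem A = P^dagger diag(lambda) P (spectralmx / spectral_diag):
   f(A) := P^dagger diag(f lambda_k) P, where f : R -> C is applied to the
   (real) eigenvalues. *)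
Definition fcalc {R : realType} n (f : R -> R[i]) (A : 'M[R[i]]_n) : 'M[R[i]]_n :=
  dagger (spectralmx A) *m
  diag_mx (\row_k f (complex.Re (spectral_diag A 0 k))) *m spectralmx A.

Definition mexpR {R : realType} n (s : R) (A : 'M[R[i]]_n) : 'M[R[i]]_n :=
  fcalc (fun x => ((expR (s * x))%:C)%C) A.

Definition mexpI {R : realType} n (t : R) (A : 'M[R[i]]_n) : 'M[R[i]]_n :=
  fcalc (fun x => Complex (cos (t * x)) (sin (t * x))) A.

Definition msqrt {R : realType} n (A : 'M[R[i]]_n) : 'M[R[i]]_n :=
  fcalc (fun x => ((Num.sqrt x)%:C)%C) A.

Definition vnorm {R : realType} n (v : 'cV[R[i]]_n) : R :=
  Num.sqrt (complex.Re ((dagger v *m v) 0 0)).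

Definition opnorm {R : realType} n (A : 'M[R[i]]_n) : R :=
  sup [set r : R | exists v : 'cV[R[i]]_n, vnorm v = 1 /\ r = vnorm (A *m v)].

Definition partition_fn {R : realType} n (beta : R) (H : 'M[R[i]]_n) : R[i] :=
  \tr (mexpR (- beta) H).

Definition gibbs {R : realType} n (beta : R) (H : 'M[R[i]]_n) : 'M[R[i]]_n :=
  (partition_fn beta H)^-1 *: mexpR (- beta) H.

Definition rho_theta {R : realType} n (beta t : R) (H U : 'M[R[i]]_n) : 'M[R[i]]_n :=
  mexpI t H *m dagger U *m gibbs beta H *m U *m mexpI (- t) H.

Definition deltaH {R : realType} n (H U : 'M[R[i]]_n) : 'M[R[i]]_n :=
  dagger U *m H *m U - H.

(* Main.v *)
Require Import Defs.
From HB Require Import structures.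
From mathcomp Require Import all_boot all_order all_algebra.
From mathcomp Require Import sesquilinear spectral.
From mathcomp Require Import classical_sets reals.
From mathcomp.analysis Require Import sequences exp trigo.
From mathcomp Require Import complex.
From mathcomp Require Import ring lra.
Import Order.TTheory GRing.Theory Num.Theory.
Local Open Scope ring_scope.
Set Implicit Arguments.
Unset Strict Implicit.
Unset Printing Implicit Defensive.
Section Gen.
Variable C : numClosedFieldType.
Local Open Scope sesquilinear_scope.

Lemma unitary_tK n (Q : 'M[C]_n) : Q \is unitarymx -> Q^t* *m Q = 1%:M.
Proof. by move=> QU; rewrite -[Q^t*]mul1mx mulmxKtV. Qed.

Lemma unitary_Kt n (Q : 'M[C]_n) : Q \is unitarymx -> Q *m Q^t* = 1%:M.
Proof. by move/unitarymxP. Qed.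

Lemma fcalc_gen n (g : C -> C) (P Q : 'M[C]_n) (e d : 'rV[C]_n) :
  P \is unitarymx -> Q \is unitarymx ->
  P^t* *m diag_mx e *m P = Q^t* *m diag_mx d *m Q ->
  P^t* *m diag_mx (\row_k g (e 0 k)) *m P = Q^t* *m diag_mx (\row_k g (d 0 k)) *m Q.
Proof.
move=> PU QU eM.
have hW : (Q *m P^t*) *m diag_mx e = diag_mx d *m (Q *m P^t*).
  have h1 : Q *m (P^t* *m diag_mx e *m P) *m P^t* = (Q *m P^t*) *m diag_mx e.
    by rewrite !mulmxA -(mulmxA _ P) unitary_Kt // mulmx1.
  have h2 : Q *m (Q^t* *m diag_mx d *m Q) *m P^t* = diag_mx d *m (Q *m P^t*).
    by rewrite !mulmxA unitary_Kt // mul1mx.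
  by rewrite -h1 -h2 eM.
have hWf : forall W : 'M[C]_n, W *m diag_mx e = diag_mx d *m W ->
   W *m diag_mx (\row_k g (e 0 k)) = diag_mx (\row_k g (d 0 k)) *m W.
  move=> W hW'.
  have hWe : forall i j, W i j * e 0 j = d 0 i * W i j.
    move=> i j; move/matrixP: hW' => /(_ i j).
    by rewrite mul_mx_diag mul_diag_mx !mxE.
  apply/matrixP => i j; rewrite mul_mx_diag mul_diag_mx !mxE.
  have [->|Wn0] := eqVneq (W i j) 0; first by rewrite mulr0 mul0r.
  have : e 0 j = d 0 i.
    by apply: (mulfI Wn0); rewrite hWe mulrC.
  by move=> ->; rewrite mulrC.
have hP : P^t* = Q^t* *m (Q *m P^t*) by rewrite mulmxA unitary_tK // mul1mx.
have -> : P^t* *m diag_mx (\row_k g (e 0 k)) *m P =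
   Q^t* *m ((Q *m P^t*) *m diag_mx (\row_k g (e 0 k))) *m P by rewrite mulmxA -hP.
by rewrite hWf // -!mulmxA unitary_tK // mulmx1.
Qed.

Lemma conj_sand n (Q : 'M[C]_n) (d : 'rV[C]_n) :
  (Q^t* *m diag_mx d *m Q)^t* = Q^t* *m diag_mx (\row_k (d 0 k)^*) *m Q.
Proof.
rewrite !trmx_mul !map_mxM trmxCK mulmxA; congr (_ *m _ *m _).
apply/matrixP => i j; rewrite !mxE rmorphMn eq_sym.
by have [->|_] := eqVneq i j; rewrite ?mulr0n.
Qed.

Lemma diag_conj n (d : 'rV[C]_n) :
  (diag_mx d)^t* = diag_mx (\row_k (d 0 k)^*).
Proof.
apply/matrixP => i j; rewrite !mxE rmorphMn eq_sym.
by have [->|_] := eqVneq i j; rewrite ?mulr0n.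
Qed.

Lemma diag_unitary n (d : 'rV[C]_n) :
  (forall k, d 0 k * (d 0 k)^* = 1) -> diag_mx d \is unitarymx.
Proof.
move=> h; apply/unitarymxP; rewrite diag_conj.
rewrite mulmx_diag; apply/matrixP => i j; rewrite !mxE.
by have [->|_] := eqVneq i j; rewrite ?mulr0n ?h.
Qed.

Lemma entry_row n (Y M : 'M[C]_n) i :
  (Y *m M *m Y^t*) i i = ((row i Y) *m M *m (row i Y)^t*) 0 0.
Proof.
rewrite !mxE; apply: eq_bigr => k _; rewrite !mxE; congr (_ * _).
by apply: eq_bigr => l _; rewrite !mxE.
Qed.

Lemma entry_row1 n (Y : 'M[C]_n) i :
  (Y *m Y^t*) i i = ((row i Y) *m (row i Y)^t*) 0 0.
Proof. by rewrite !mxE; apply: eq_bigr => k _; rewrite !mxE. Qed.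

Lemma tr_sandwich n (P Q D1 D2 : 'M[C]_n) :
  \tr ((P^t* *m D1 *m P) *m (Q^t* *m D2 *m Q)) =
  \tr (D1 *m (P *m Q^t*) *m D2 *m (P *m Q^t*)^t*).
Proof.
rewrite !trmx_mul !map_mxM trmxCK -!mulmxA mxtrace_mulC !mulmxA.
by [].
Qed.

Lemma rho_form n (P U E Dg : 'M[C]_n) :
  E *m U^t* *m (P^t* *m Dg *m P) *m U *m E^t* =
  (P *m U *m E^t*)^t* *m Dg *m (P *m U *m E^t*).
Proof. by rewrite !trmx_mul !map_mxM trmxCK !mulmxA. Qed.

Lemma conj_key n (P U E H : 'M[C]_n) (l De : 'rV[C]_n) :
  P \is unitarymx -> H = P^t* *m diag_mx l *m P ->
  E = P^t* *m diag_mx De *m P -> diag_mx De \is unitarymx ->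
  let W := P *m (P *m U *m E^t*)^t* in
  W *m diag_mx l *m W^t* =
  diag_mx l + (P *m E) *m (U^t* *m H *m U - H) *m (P *m E)^t*.
Proof.
move=> PU eH eE DU W.
set Y := P *m E.
have hY : Y = diag_mx De *m P by rewrite /Y eE !mulmxA unitary_Kt // mul1mx.
have hW : W = Y *m U^t* *m P^t*.
  by rewrite /W /Y !trmx_mul !map_mxM trmxCK !mulmxA.
have hWt : W^t* = P *m U *m Y^t*.
  by rewrite hW !trmx_mul !map_mxM !trmxCK !mulmxA.
have hYt : Y^t* = P^t* *m (diag_mx De)^t*.
  by rewrite hY !trmx_mul !map_mxM.
have hYH : Y *m H *m Y^t* = diag_mx l.
  rewrite hYt hY eH !mulmxA -!(mulmxA _ P (P^t*)) !unitary_Kt // !mulmx1.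
  by rewrite diag_mxC -mulmxA unitary_Kt // mulmx1.
rewrite mulmxBr mulmxBl hYH addrC subrK hWt hW.
by rewrite eH !mulmxA.
Qed.

Lemma scale_sand n (a : C) (P : 'M[C]_n) (d : 'rV[C]_n) :
  a *: (P^t* *m diag_mx d *m P) = P^t* *m diag_mx (\row_k (a * d 0 k)) *m P.
Proof.
rewrite scalemxAl scalemxAr; congr (_ *m _ *m _).
apply/matrixP => i j; rewrite !mxE.
by have [->|_] := eqVneq i j; rewrite ?mulr0n ?mulr0.
Qed.

Lemma spec_decomp n (M : 'M[C]_n) : M \is normalmx ->
  M = (spectralmx M)^t* *m diag_mx (spectral_diag M) *m spectralmx M.
Proof.
by move=> /orthomx_spectralP eM; rewrite {1}eM invmx_unitary // spectral_unitarymx.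
Qed.

Lemma decomp_normal n (Q : 'M[C]_n) d : Q \is unitarymx ->
  Q^t* *m diag_mx d *m Q \is normalmx.
Proof.
by move=> QU; apply/orthomx_spectral_subproof; exists (Q, d) => //=; rewrite invmx_unitary.
Qed.

Lemma fcalc_gen2 n (g : C -> C) (M Q : 'M[C]_n) (d : 'rV[C]_n) :
  Q \is unitarymx -> M = Q^t* *m diag_mx d *m Q ->
  (spectralmx M)^t* *m diag_mx (\row_k g (spectral_diag M 0 k)) *m spectralmx M =
  Q^t* *m diag_mx (\row_k g (d 0 k)) *m Q.
Proof.
move=> QU eM; apply: fcalc_gen => //; first exact: spectral_unitarymx.
by rewrite -spec_decomp // eM decomp_normal.
Qed.

End Gen.

Section S.
Variable R : realType.
Local Notation C := (R[i]).
Local Open Scope sesquilinear_scope.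
Local Open Scope complex_scope.

Lemma daggerE m n (A : 'M[C]_(m,n)) : dagger A = A^t*.
Proof. by []. Qed.

Lemma ReD (x y : C) : complex.Re (x + y) = complex.Re x + complex.Re y.
Proof. by case: x => ? ?; case: y. Qed.
Lemma ImD (x y : C) : complex.Im (x + y) = complex.Im x + complex.Im y.
Proof. by case: x => ? ?; case: y. Qed.

Lemma Re_sum (I : Type) (r : seq I) (P : pred I) (F : I -> C) :
  complex.Re (\sum_(i <- r | P i) F i) = \sum_(i <- r | P i) complex.Re (F i).
Proof. by apply: (big_morph _ ReD). Qed.
Lemma Im_sum (I : Type) (r : seq I) (P : pred I) (F : I -> C) :
  complex.Im (\sum_(i <- r | P i) F i) = \sum_(i <- r | P i) complex.Im (F i).
Proof. by apply: (big_morph _ ImD). Qed.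

Definition dotRe n (x y : 'cV[C]_n) : R := complex.Re ((x^t* *m y) 0 0).

Lemma dotReE n (x y : 'cV[C]_n) : dotRe x y =
  \sum_k (complex.Re (x k 0) * complex.Re (y k 0) + complex.Im (x k 0) * complex.Im (y k 0)).
Proof.
rewrite /dotRe !mxE Re_sum; apply: eq_bigr => k _; rewrite !mxE.
case: (x k 0) => a b; case: (y k 0) => c d /=; ring.
Qed.

Lemma vnormE n (x : 'cV[C]_n) : vnorm x = Num.sqrt (dotRe x x).
Proof. by []. Qed.

Lemma dotRe_ge0 n (x : 'cV[C]_n) : 0 <= dotRe x x.
Proof.
by rewrite dotReE; apply: sumr_ge0 => k _; rewrite addr_ge0 // -expr2 sqr_ge0.
Qed.

Lemma cs_real n (a b c d : 'I_n -> R) :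
  \sum_k (a k ^+ 2 + b k ^+ 2) = 1 ->
  \sum_k (a k * c k + b k * d k) <= Num.sqrt (\sum_k (c k ^+ 2 + d k ^+ 2)).
Proof.
move=> h1; set X := \sum_k _; set Q := \sum_k _.
have Q0 : 0 <= Q by apply: sumr_ge0 => k _; rewrite addr_ge0 // sqr_ge0.
have key : forall t, 0 <= t ^+ 2 - 2 * t * X + Q.
  move=> t.
  have -> : t ^+ 2 - 2 * t * X + Q =
      \sum_k ((t * a k - c k) ^+ 2 + (t * b k - d k) ^+ 2).
    transitivity (\sum_k (t ^+ 2 * (a k ^+ 2 + b k ^+ 2) - (2 * t) * (a k * c k + b k * d k)
                          + (c k ^+ 2 + d k ^+ 2))).
      by rewrite big_split /= big_split /= sumrN -!mulr_sumr h1 mulr1.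
    by apply: eq_bigr => k _; ring.
  by apply: sumr_ge0 => k _; rewrite addr_ge0 // sqr_ge0.
set r := Num.sqrt Q.
have r0 : 0 <= r by rewrite sqrtr_ge0.
have rQ : r ^+ 2 = Q by rewrite sqr_sqrtr.
rewrite leNgt; apply/negP => Xr.
have := key X; rewrite -rQ => h.
nra.
Qed.

Lemma cs_vec n (v y : 'cV[C]_n) : dotRe v v = 1 -> dotRe v y <= vnorm y.
Proof.
move=> h; rewrite vnormE.
have -> : dotRe y y = \sum_k (complex.Re (y k 0) ^+ 2 + complex.Im (y k 0) ^+ 2).
  by rewrite dotReE; apply: eq_bigr => k _; rewrite !expr2.
rewrite dotReE; apply: cs_real; rewrite -h dotReE.
by apply: eq_bigr => k _; rewrite !expr2.
Qed.

Lemma vnorm1 n (v : 'cV[C]_n) : vnorm v = 1 -> dotRe v v = 1.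
Proof.
rewrite vnormE => h; rewrite -(sqr_sqrtr (dotRe_ge0 v)) h; exact: expr1n.
Qed.

Lemma sq_bound n (a b c d : 'I_n -> R) :
  \sum_k (a k ^+ 2 + b k ^+ 2) = 1 ->
  (\sum_k (a k * c k + b k * d k)) ^+ 2 <= \sum_k (c k ^+ 2 + d k ^+ 2).
Proof.
move=> h; set Q := \sum_k (c k ^+ 2 + d k ^+ 2).
have Q0 : 0 <= Q by apply: sumr_ge0 => k _; rewrite addr_ge0 // sqr_ge0.
have h1 := cs_real c d h.
have h2 := cs_real (fun k => - c k) (fun k => - d k) h.
have e2 : \sum_k (a k * - c k + b k * - d k) = - \sum_k (a k * c k + b k * d k).
  by rewrite -sumrN; apply: eq_bigr => k _; ring.
have eQ : \sum_k ((- c k) ^+ 2 + (- d k) ^+ 2) = Q.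
  by apply: eq_bigr => k _; rewrite !sqrrN.
rewrite e2 eQ in h2.
have sQ : Num.sqrt Q ^+ 2 = Q by rewrite sqr_sqrtr.
rewrite -/Q in h1.
have s0 : 0 <= Num.sqrt Q by rewrite sqrtr_ge0.
nra.
Qed.

Lemma opnorm_ub n (A : 'M[C]_n) (v : 'cV[C]_n) :
  vnorm v = 1 -> vnorm (A *m v) <= opnorm A.
Proof.
move=> hv; apply: sup_upper_bound; last by exists v.
split; first by exists (vnorm (A *m v)); exists v.
set K := \sum_k (\sum_j (complex.Re (A k j) ^+ 2 + complex.Im (A k j) ^+ 2)
               + \sum_j (complex.Im (A k j) ^+ 2 + complex.Re (A k j) ^+ 2)).
have K0 : 0 <= K.
  by apply: sumr_ge0 => k _; rewrite addr_ge0 //; apply: sumr_ge0 => j _;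
     rewrite addr_ge0 ?sqr_ge0.
exists (Num.sqrt K) => r [w [hw ->]].
rewrite vnormE ler_sqrt //.
have hw1 := vnorm1 hw; rewrite dotReE in hw1.
have hw2 : \sum_k (complex.Re (w k 0) ^+ 2 + complex.Im (w k 0) ^+ 2) = 1.
  by rewrite -hw1; apply: eq_bigr => k _; rewrite !expr2.
rewrite dotReE; apply: ler_sum => k _.
have eRe : complex.Re ((A *m w) k 0) =
  \sum_j (complex.Re (w j 0) * complex.Re (A k j) + complex.Im (w j 0) * (- complex.Im (A k j))).
  rewrite mxE Re_sum; apply: eq_bigr => j _.
  by case: (A k j) => ? ?; case: (w j 0) => ? ? /=; ring.
have eIm : complex.Im ((A *m w) k 0) =
  \sum_j (complex.Re (w j 0) * complex.Im (A k j) + complex.Im (w j 0) * complex.Re (A k j)).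
  rewrite mxE Im_sum; apply: eq_bigr => j _.
  by case: (A k j) => ? ? ; case: (w j 0) => ? ? /=; ring.
rewrite -!expr2; apply: lerD.
  rewrite eRe (le_trans (sq_bound _ _ hw2)) //.
  by rewrite le_eqVlt; apply/orP; left; apply/eqP/eq_bigr => j _; rewrite sqrrN.
by rewrite eIm (le_trans (sq_bound _ _ hw2)).
Qed.

Lemma quad_le_opnorm n (M : 'M[C]_n) (v : 'cV[C]_n) :
  vnorm v = 1 -> complex.Re ((v^t* *m M *m v) 0 0) <= opnorm M.
Proof.
move=> hv; rewrite -mulmxA.
apply: le_trans (opnorm_ub M hv).
by have := cs_vec (M *m v) (vnorm1 hv).
Qed.

Lemma jensen n (p x : 'I_n -> R) : (forall j, 0 <= p j) -> \sum_j p j = 1 ->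
  expR (\sum_j p j * x j) <= \sum_j p j * expR (x j).
Proof.
move=> p0 p1; set m := \sum_j p j * x j.
have b : forall j, p j * (expR m * (1 + (x j - m))) <= p j * expR (x j).
  move=> j; apply: ler_wpM2l => //.
  have -> : expR (x j) = expR m * expR (x j - m) by rewrite -expRD addrC subrK.
  by apply: ler_wpM2l; [exact: ltW (expR_gt0 _)| exact: expR_ge1Dx].
apply: le_trans (ler_sum _ (fun j _ => b j)).
have -> : \sum_j p j * (expR m * (1 + (x j - m))) =
          \sum_j (expR m * p j + expR m * (p j * x j) - expR m * m * p j).
  by apply: eq_bigr => j _; ring.
rewrite big_split /= big_split /= sumrN -!mulr_sumr p1 -/m; lra.
Qed.

Lemma fcalc_eq n (f : R -> C) (M Q : 'M[C]_n) (d : 'rV[C]_n) :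
  Q \is unitarymx -> M = Q^t* *m diag_mx d *m Q ->
  fcalc f M = Q^t* *m diag_mx (\row_k f (complex.Re (d 0 k))) *m Q.
Proof.
move=> QU eM; exact: (fcalc_gen2 (fun x => f (complex.Re x)) QU eM).
Qed.

Lemma herm_decomp n (H : 'M[C]_n) : H \is hermsymmx ->
  H = (spectralmx H)^t* *m
      diag_mx (\row_k (complex.Re (spectral_diag H 0 k))%:C) *m spectralmx H.
Proof.
move=> hH; have eH := spec_decomp (hermitian_normalmx hH).
suff <- : spectral_diag H = \row_k (complex.Re (spectral_diag H 0 k))%:C by [].
apply/rowP => k; rewrite mxE RRe_real //.
by have /mxOverP := hermitian_spectral_diag_real hH; apply.
Qed.

End S.

Section F.
Variable R : realType.

Lemma real_final n (n0 : (0 < n)%N) (beta : R) (b0 : 0 < beta) (lam : 'I_n -> R)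
  (p : 'I_n -> 'I_n -> R) (N : R) :
  (forall i j, 0 <= p i j) -> (forall i, \sum_j p i j = 1) ->
  (forall i, \sum_j p i j * lam j <= lam i + N) ->
  expR (- (beta * N) / 2) <=
  \sum_i \sum_j Num.sqrt (expR (- beta * lam i) / \sum_k expR (- beta * lam k)) *
                Num.sqrt (expR (- beta * lam j) / \sum_k expR (- beta * lam k)) * p i j.
Proof.
move=> p0 p1 hb.
set z := \sum_k expR (- beta * lam k).
have z0 : 0 < z.
  rewrite /z (bigD1 (Ordinal n0)) //=.
  have := expR_gt0 (- beta * lam (Ordinal n0)).
  have : 0 <= \sum_(k | k != Ordinal n0) expR (- beta * lam k).
    by apply: sumr_ge0 => k _; exact: ltW (expR_gt0 _).
  lra.
have hsq : forall a : R, Num.sqrt (expR a) = expR (a / 2).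
  move=> a; have -> : expR a = expR (a / 2) ^+ 2 by rewrite expr2 -expRD -splitr.
  by rewrite sqrtr_sqr ger0_norm // ltW // expR_gt0.
have sz : Num.sqrt z ^+ 2 = z by rewrite sqr_sqrtr // ltW.
have sz0 : 0 < Num.sqrt z by rewrite sqrtr_gt0.
have hs : forall k, Num.sqrt (expR (- beta * lam k) / z) = expR (- beta * lam k / 2) / Num.sqrt z.
  move=> k; rewrite sqrtrM ?(ltW (expR_gt0 _)) // sqrtrV ?(ltW z0) // hsq //.
set q := Num.sqrt z in sz sz0 hs.
set c := expR (- (beta * N) / 2).
have key : forall i, expR (- beta * lam i) / z * c <=
   \sum_j Num.sqrt (expR (- beta * lam i) / z) * Num.sqrt (expR (- beta * lam j) / z) * p i j.
  move=> i.
  rewrite (eq_bigr (fun j => expR (- beta * lam i / 2) / z * (p i j * expR (- beta * lam j / 2)))); last first.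
    move=> j _; rewrite !hs -sz; field.
    by rewrite gt_eqF.
  rewrite -mulr_sumr.
  have eE : expR (- beta * lam i) = expR (- beta * lam i / 2) * expR (- beta * lam i / 2).
    by rewrite -expRD -splitr.
  rewrite eE /c.
  have -> : expR (- beta * lam i / 2) * expR (- beta * lam i / 2) / z * expR (- (beta * N) / 2) =
            expR (- beta * lam i / 2) / z * expR (- beta * lam i / 2 + - (beta * N) / 2).
    rewrite expRD; ring.
  apply: ler_wpM2l; first by rewrite divr_ge0 // ltW // expR_gt0.
  apply: le_trans (jensen (fun j => - beta * lam j / 2) (p0 i) (p1 i)).
  rewrite ler_expR.
  have -> : \sum_j p i j * (- beta * lam j / 2) = - (beta / 2) * \sum_j p i j * lam j.
    by rewrite mulr_sumr; apply: eq_bigr => j _; ring.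
  have := hb i; nra.
apply: le_trans (ler_sum _ (fun i _ => key i)).
rewrite -mulr_suml -mulr_suml -/z mulfV ?mul1r //.
by rewrite gt_eqF.
Qed.

Local Open Scope sesquilinear_scope.
Local Open Scope complex_scope.

Lemma scal_id (a b : R) (w : R[i]) :
  a%:C * w * b%:C * w^*%R = (a * b * complex.Re (w * w^*%R))%:C.
Proof.
have -> : a%:C * w * b%:C * w^*%R = (a%:C * b%:C) * (w * w^*%R) by ring.
by rewrite -[w * w^*%R in LHS](RRe_real (ger0_real (mul_conjC_ge0 w))) -!rmorphM.
Qed.

Lemma final n (n0 : (0 < n)%N) (beta : R) (b0 : 0 < beta) (lam : 'I_n -> R)
  (W Y D : 'M[R[i]]_n) :
  W \is unitarymx -> Y \is unitarymx ->
  W *m diag_mx (\row_k (lam k)%:C) *m W^t* = diag_mx (\row_k (lam k)%:C) + Y *m D *m Y^t* ->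
  (expR (- (beta * opnorm D) / 2))%:C <=
  \tr (diag_mx (\row_k (Num.sqrt (expR (- beta * lam k) / \sum_j expR (- beta * lam j)))%:C) *m W *m
       diag_mx (\row_k (Num.sqrt (expR (- beta * lam k) / \sum_j expR (- beta * lam j)))%:C) *m W^t*).
Proof.
move=> WU YU hWL.
pose p i j := complex.Re (W i j * (W i j)^*%R).
have pC : forall i j, W i j * (W i j)^*%R = (p i j)%:C.
  move=> i j; rewrite RRe_real //; apply: ger0_real; exact: mul_conjC_ge0.
have p0 : forall i j, 0 <= p i j.
  by move=> i j; rewrite -ler0c -pC mul_conjC_ge0.
have p1 : forall i, \sum_j p i j = 1.
  move=> i; have := congr1 (fun M : 'M[R[i]]_n => M i i) (unitary_Kt WU).
  rewrite /= !mxE eqxx mulr1n => h.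
  apply: (@complexI R); rewrite rmorph_sum rmorph1 -h; apply: eq_bigr => j _.
  by rewrite !mxE pC.
have hb : forall i, \sum_j p i j * lam j <= lam i + opnorm D.
  move=> i.
  have h := congr1 (fun M : 'M[R[i]]_n => complex.Re (M i i)) hWL.
  have lhs : complex.Re ((W *m diag_mx (\row_k (lam k)%:C) *m W^t*) i i) = \sum_j p i j * lam j.
    rewrite mul_mx_diag mxE Re_sum; apply: eq_bigr => j _; rewrite !mxE.
    by rewrite mulrAC pC -rmorphM.
  have rhs : complex.Re ((diag_mx (\row_k (lam k)%:C) + Y *m D *m Y^t*) i i) =
             lam i + complex.Re ((Y *m D *m Y^t*) i i).
    by rewrite mxE ReD [diag_mx _ i i]mxE eqxx mulr1n mxE.
  have q : complex.Re ((Y *m D *m Y^t*) i i) <= opnorm D.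
    rewrite entry_row.
    have hv : vnorm ((row i Y)^t*) = 1.
      by rewrite vnormE /dotRe trmxCK -entry_row1 unitary_Kt // mxE eqxx mulr1n sqrtr1.
    by have := quad_le_opnorm D hv; rewrite trmxCK.
  rewrite -lhs; move: h => /= ->; rewrite rhs; lra.
have htr : \tr (diag_mx (\row_k (Num.sqrt (expR (- beta * lam k) / \sum_j expR (- beta * lam j)))%:C) *m W *m
       diag_mx (\row_k (Num.sqrt (expR (- beta * lam k) / \sum_j expR (- beta * lam j)))%:C) *m W^t*)
   = (\sum_i \sum_j Num.sqrt (expR (- beta * lam i) / \sum_k expR (- beta * lam k)) *
                Num.sqrt (expR (- beta * lam j) / \sum_k expR (- beta * lam k)) * p i j)%:C.
  rewrite mul_diag_mx mul_mx_diag /mxtrace rmorph_sum; apply: eq_bigr => i _.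
  rewrite mxE rmorph_sum; apply: eq_bigr => j _; rewrite !mxE.
  by rewrite scal_id.
rewrite htr lecR; exact: real_final.
Qed.

End F.
Section Main.
Local Open Scope sesquilinear_scope.
Local Open Scope complex_scope.
Variables (R : realType) (n : nat) (H U : 'M[R[i]]_n) (beta t : R).
Hypotheses (n0 : (0 < n)%N) (hH : H \is hermsymmx) (hU : U \is unitarymx) (b0 : 0 < beta).
Local Notation P := (spectralmx H).
Local Notation lamb k := (complex.Re (spectral_diag H 0 k)).
Local Notation l := (\row_k (lamb k)%:C).
Local Notation ee k := (expR (- beta * lamb k)).
Local Notation z := (\sum_k ee k).
Local Notation ss k := (Num.sqrt (ee k / z)).
Local Notation ds := (\row_k (ss k)%:C).
Local Notation E := (mexpI t H).
Local Notation De := (\row_k (Complex (cos (t * lamb k)) (sin (t * lamb k)))).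
Local Notation Q := (P *m U *m E^t*).
Local Notation W := (P *m Q^t*).

Lemma PU : P \is unitarymx. Proof. exact: spectral_unitarymx. Qed.
Lemma eH : H = P^t* *m diag_mx l *m P. Proof. exact: herm_decomp. Qed.
Lemma z0 : 0 < z.
Proof.
rewrite (bigD1 (Ordinal n0)) //=.
have := expR_gt0 (- beta * lamb (Ordinal n0)).
have : 0 <= \sum_(k | k != Ordinal n0) ee k.
  by apply: sumr_ge0 => k _; exact: ltW (expR_gt0 _).
lra.
Qed.
Lemma hexp : mexpR (- beta) H = P^t* *m diag_mx (\row_k (ee k)%:C) *m P.
Proof. by []. Qed.
Lemma hZ : partition_fn beta H = z%:C.
Proof.
rewrite /partition_fn hexp mxtrace_mulC mulmxA unitary_Kt ?PU // mul1mx mxtrace_diag.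
by rewrite rmorph_sum; apply: eq_bigr => k _; rewrite mxE.
Qed.
Lemma hG : gibbs beta H = P^t* *m diag_mx (\row_k (ee k / z)%:C) *m P.
Proof.
have hrow : \row_k ((z%:C)^-1 * (\row_k (ee k)%:C) 0 k) = \row_k (ee k / z)%:C.
  by apply/rowP => k; rewrite !mxE rmorphM fmorphV mulrC.
by rewrite /gibbs hZ hexp scale_sand hrow.
Qed.
Lemma hsG : msqrt (gibbs beta H) = P^t* *m diag_mx ds *m P.
Proof.
rewrite /msqrt (fcalc_eq _ PU hG).
have hrow : \row_k ((Num.sqrt (complex.Re ((\row_k (ee k / z)%:C) 0 k)))%:C) = ds.
  by apply/rowP => k; rewrite !mxE.
by rewrite hrow.
Qed.
Lemma hE : E = P^t* *m diag_mx De *m P. Proof. by []. Qed.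
Lemma hE' : mexpI (- t) H = E^t*.
Proof.
rewrite hE conj_sand.
have hrow : \row_k (De 0 k)^* = \row_k (Complex (cos (- t * lamb k)) (sin (- t * lamb k))).
  by apply/rowP => k; rewrite !mxE /= mulNr cosN sinN.
by rewrite hrow.
Qed.
Lemma DeU : diag_mx De \is unitarymx.
Proof.
apply: diag_unitary => k; rewrite mxE.
have h := cos2Dsin2 (t * lamb k); rewrite !expr2 in h.
apply/eqP; rewrite eq_complex /=; apply/andP; split; apply/eqP; lra.
Qed.
Lemma EU : E \is unitarymx.
Proof.
rewrite hE; apply: mul_unitarymx; last exact: PU.
by apply: mul_unitarymx; [rewrite trmxC_unitary; exact: PU | exact: DeU].
Qed.
Lemma QU : Q \is unitarymx.
Proof.
apply: mul_unitarymx; first exact: (mul_unitarymx PU hU).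
by rewrite trmxC_unitary; exact: EU.
Qed.
Lemma hrho : rho_theta beta t H U = Q^t* *m diag_mx (\row_k (ee k / z)%:C) *m Q.
Proof. by rewrite /rho_theta hE' hG daggerE rho_form. Qed.
Lemma hsrho : msqrt (rho_theta beta t H U) = Q^t* *m diag_mx ds *m Q.
Proof.
rewrite /msqrt (fcalc_eq _ QU hrho).
have hrow : \row_k ((Num.sqrt (complex.Re ((\row_k (ee k / z)%:C) 0 k)))%:C) = ds.
  by apply/rowP => k; rewrite !mxE.
by rewrite hrow.
Qed.
Lemma htr : \tr (msqrt (gibbs beta H) *m msqrt (rho_theta beta t H U)) =
  \tr (diag_mx ds *m W *m diag_mx ds *m W^t*).
Proof. by rewrite hsG hsrho tr_sandwich. Qed.
Lemma WU : W \is unitarymx.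
Proof. by apply: mul_unitarymx; [exact: PU | rewrite trmxC_unitary; exact: QU]. Qed.
Lemma YU : P *m E \is unitarymx.
Proof. by apply: mul_unitarymx; [exact: PU | exact: EU]. Qed.
Lemma hWL : W *m diag_mx l *m W^t* = diag_mx l + (P *m E) *m deltaH H U *m (P *m E)^t*.
Proof. by rewrite /deltaH daggerE; exact: (conj_key U PU eH hE DeU). Qed.
Lemma main_goal : (expR (- (beta * opnorm (deltaH H U)) / 2))%:C <=
  \tr (diag_mx ds *m W *m diag_mx ds *m W^t*).
Proof. exact: (final n0 b0 WU YU hWL). Qed.
End Main.

Unset Implicit Arguments.

Theorem proposition2 (R : realType) (n : nat) (H U : 'M[R[i]]_n) (beta : R) :
  (0 < n)%N -> H \is hermsymmx -> U \is unitarymx -> 0 < beta ->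
  forall t : R,
    ((expR (- (beta * opnorm (deltaH H U)) / 2))%:C)%C
      <= \tr (msqrt (gibbs beta H) *m msqrt (rho_theta beta t H U)).
Proof.
move=> n0 hH hU b0 t.
rewrite htr //.
by apply: main_goal.
Qed.
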